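(* Let $r,m\in\mathbb{N}$ and let $G$ be a graph with $\mathrm{scol}_r(G)=m$. Then every vertex of $G$ has finite $(r,m-1)$-rank.
   Context: Strong coloring numbers (with the following orientation convention): for a linear order $\le$ on $V(G)$, a vertex $w$ is strongly $r$-reachable from $v$ if $w\ge v$ and there is a path from $v$ to $w$ of length at most $r$ all of whose vertices other than $v$ and $w$ are smaller than $v$. $\mathrm{scol}_r(G)$ is the minimum over all linear orders of $V(G)$ of the maximum, over vertices $v$, of the number of vertices strongly $r$-reachable from $v$. $N_r^G(v)$ is the closed $r$-neighborhood of $v$; $G-S$ is the subgraph induced on $V(G)\setminus S$. The $(r,m)$-rank of vertices of $G$ (values in $\mathbb{N}\cup\{\infty\}$) is defined by: initially every vertex has rank $\infty$; in rounds $i=1,2,\dots$, every vertex $v$ currently of rank $\infty$ receives rank $i$ if there exists $S\subseteq V(G)\setminus\{v\}$ with $|S|\le m$ such that every vertex of $N_r^{G-S}(v)\setminus\{v\}$ received a finite rank in rounds $1,\dots,i-1$; the procedure stops when all ranks are finite or a round assigns no new rank. *)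

(* Defs.v *)
(* Finite simple graphs on a finType T, given by an
   adjacency relation e : rel T (assumed symmetric and irreflexive in the
   theorem). *)
From mathcomp Require Import all_boot fingroup perm.
From mathcomp Require Import boolp.
Set Implicit Arguments. Unset Strict Implicit. Unset Printing Implicit Defensive.

Section Defs.
Variable T : finType.

(* A linear order on T is encoded by a permutation p : {perm T};
   x <=_p y iff the position of p x in enum T is at most that of p y.
   Every linear order on the finite set T arises this way. *)
Definition ord_le (p : {perm T}) (x y : T) : bool :=
  (enum_rank (p x) <= enum_rank (p y))%N.
Definition ord_lt (p : {perm T}) (x y : T) : bool :=
  (enum_rank (p x) < enum_rank (p y))%N.

Definition sreach (e : rel T) (r : nat) (p : {perm T}) (v w : T) : Prop :=
  ord_le p v w /\
  exists s : seq T, [/\ path e v s, last v s = w, (size s <= r)%N &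
                        all (fun x => ord_lt p x v) (take (size s).-1 s)].

Definition sreach_set (e : rel T) (r : nat) (p : {perm T}) (v : T) : {set T} :=
  [set w | `[< sreach e r p v w >]].

Definition scol_of (e : rel T) (r : nat) (p : {perm T}) : nat :=
  \max_(v : T) #|sreach_set e r p v|.

Definition scol (e : rel T) (r : nat) : nat :=
  \big[minn/scol_of e r 1%g]_(p : {perm T}) scol_of e r p.

(* closed r-neighbourhood of v in G - S (meaningful when v \notin S):
   vertices u reachable from v by a walk of length <= r avoiding S *)
Definition nbhd_minus (e : rel T) (r : nat) (S : {set T}) (v : T) : {set T} :=
  [set u | `[< exists s : seq T, [/\ path e v s, last v s = u,
                 (size s <= r)%N & all (fun x => x \notin S) s] >]].

(* ranked r m e i = set of vertices having received a finite (r,m)-rank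
   in rounds 1..i. *)
Fixpoint ranked (e : rel T) (r m : nat) (i : nat) : {set T} :=
  match i with
  | 0 => set0
  | i'.+1 =>
      let R := ranked e r m i' in
      R :|: [set v | `[< exists S : {set T},
                [/\ v \notin S, (#|S| <= m)%N &
                    nbhd_minus e r S v :\ v \subset R] >]]
  end.

Definition finite_rank (e : rel T) (r m : nat) (v : T) : Prop :=
  exists i, v \in ranked e r m i.

End Defs.

(* Main.v *)
Require Import Defs.
From mathcomp Require Import all_boot fingroup perm.
From mathcomp Require Import boolp.

Section Aux.
Variable T : finType.

Lemma split_last_occ (v : T) (t : seq T) :
  exists t1 t2, [/\ t = t1 ++ t2, last v t1 = v & v \notin t2].
Proof.
elim/last_ind: t => [|t' y [t1 [t2 [-> H1 H2]]]].
  by exists [::], [::].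
case: (eqVneq y v) => [->|ne].
  exists (rcons (t1 ++ t2) v), [::]; split=> //; first by rewrite cats0.
  by rewrite last_rcons.
exists t1, (rcons t2 y); split=> //; first by rewrite rcons_cat.
by rewrite -cats1 mem_cat negb_or H2 mem_seq1 eq_sym ne.
Qed.

Lemma ranked_mono (e : rel T) r m i j : (i <= j)%N ->
  ranked e r m i \subset ranked e r m j.
Proof.
move=> /subnK <-; elim: (j - i)%N => [|k IH] //=.
by apply: subset_trans IH _; apply: subsetUl.
Qed.

Lemma walk_small (e : rel T) r (p : {perm T}) (v : T) (s : seq T) :
  path e v s -> (size s <= r)%N ->
  all (fun x => x \notin sreach_set e r p v :\ v) s ->
  all (fun x => (x == v) || ord_lt p x v) s.
Proof.
elim/last_ind: s => [|t x IH] //.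
rewrite rcons_path size_rcons all_rcons all_rcons => /andP[pt ex] sz /andP[xS tS].
have IHt := IH pt (ltnW sz) tS.
rewrite IHt andbT.
case: (eqVneq x v) => //= xv.
case lt: (ord_lt p x v) => //.
exfalso; move: xS; rewrite in_setD1 xv /= inE; move/negP; apply.
apply/asboolP; split.
  by rewrite /ord_le leqNgt; move: lt; rewrite /ord_lt => ->.
have [t1 [t2 [Et Hl Hn]]] := split_last_occ v t.
exists (rcons t2 x); split.
- move: pt ex; rewrite Et cat_path last_cat Hl rcons_path => /andP[_ ->] /=.
  done.
- by rewrite last_rcons.
- by rewrite size_rcons (leq_trans _ sz) // ltnS Et size_cat leq_addl.
- rewrite size_rcons /= -cats1 take_size_cat //.
  apply/allP=> y yt2.
  move/allP: IHt => /(_ y); rewrite Et mem_cat yt2 orbT => /(_ isT).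
  case/orP=> // /eqP yv; by move: Hn; rewrite -yv yt2.
Qed.

End Aux.

Theorem lemma3p6 (T : finType) (e : rel T) (r m : nat)
  (e_sym : symmetric e) (e_irr : irreflexive e) :
  scol e r = m -> forall v : T, finite_rank e r (m - 1) v.
Proof.
move=> Hm.
have [p Hp] : exists p, (scol_of e r p <= m)%N.
  rewrite -Hm /scol.
  apply: (big_ind (fun x => exists p, scol_of e r p <= x)%N).
  - by exists 1%g.
  - move=> x y [p1 H1] [p2 H2]; case: (leqP x y) => xy.
      by exists p1.
    by exists p2.
  - by move=> q _; exists q.
pose pos (x : T) := nat_of_ord (enum_rank (p x)).
have key : forall v, (forall u, (pos u < pos v)%N -> u \in ranked e r (m - 1) (pos u).+1) ->
    v \in ranked e r (m - 1) (pos v).+1.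
  move=> v IH /=; apply/setUP; right; rewrite inE; apply/asboolP.
  exists (sreach_set e r p v :\ v); split; first by rewrite in_setD1 eqxx.
  - have vin : v \in sreach_set e r p v.
      rewrite inE; apply/asboolP; split; first by rewrite /ord_le leqnn.
      by exists [::].
    have := cardsD1 v (sreach_set e r p v); rewrite vin add1n => Hc.
    have : (#|sreach_set e r p v| <= m)%N.
      apply: leq_trans Hp; rewrite /scol_of.
      exact: (leq_bigmax_cond (F:=fun v => #|sreach_set e r p v|)).
    rewrite Hc => Hle.
    have m0 : (0 < m)%N := leq_trans (ltn0Sn _) Hle.
    by rewrite subn1 -ltnS prednK.
  - apply/subsetP=> u; rewrite in_setD1 => /andP[uv]; rewrite inE => /asboolP.
    move=> [s [ps ls sz al]].
    have := @walk_small _ e r p v s ps sz al.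
    move/allP=> Hs.
    have : u \in s.
      case: s ps ls sz al Hs => [|y s'] /= _ ls _ _ _; first by move: uv; rewrite ls eqxx.
      by rewrite -ls mem_last.
    move/Hs; rewrite (negPf uv) /= => ult.
    have hu : (pos u < pos v)%N by exact: ult.
    exact: (subsetP (@ranked_mono _ e r (m - 1) _ _ hu)) _ (IH u hu).
suff H : forall n v, (pos v <= n)%N -> v \in ranked e r (m - 1) (pos v).+1.
  by move=> v; exists (pos v).+1; apply: (H (pos v)).
elim=> [|n IH] v hv; apply: key => u hu.
  by move: hv; rewrite leqn0 => /eqP h; rewrite h in hu.
by apply: IH; rewrite -ltnS (leq_trans hu hv).
Qed.
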